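(* Let $G=\langle c,q\mid c(qcq^{-1})=(qcq^{-1})c\rangle$. Then \[C_G(qcq^{-1})=\langle c,\ qcq^{-1},\ q^2cq^{-2}\rangle.\]
   Context: $C_G(g)=\{h\in G\mid gh=hg\}$ denotes the centraliser of $g$ in $G$. *)

(* Defs.v *)
(* The group G = < c, q | c (q c q^-1) = (q c q^-1) c > is
   modelled by its presentation: elements are words in c^{+-1}, q^{+-1}, and
   two words represent the same element of G iff they are related by the
   congruence generated by free cancellation and the defining relator. *)
From Stdlib Require Import List.
Import ListNotations.

Inductive gen : Type := Gc | Gq.

(* a letter: a generator together with an exponent sign (true = inverse) *)
Definition letter : Type := (gen * bool)%type.
Definition word : Type := list letter.

Definition linv (x : letter) : letter := (fst x, negb (snd x)).
Definition winv (w : word) : word := rev (map linv w).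

Definition wc : word := [(Gc, false)].
Definition wq : word := [(Gq, false)].
Definition wqi : word := [(Gq, true)].

Definition wc1 : word := wq ++ wc ++ wqi.
Definition wc2 : word := wq ++ wq ++ wc ++ wqi ++ wqi.

Definition relator : word := wc ++ wc1 ++ winv wc ++ winv wc1.

Inductive eqG : word -> word -> Prop :=
| eqG_refl w : eqG w w
| eqG_sym u v : eqG u v -> eqG v u
| eqG_trans u v w : eqG u v -> eqG v w -> eqG u w
| eqG_cancel u v x : eqG (u ++ [x; linv x] ++ v) (u ++ v)
| eqG_rel u v : eqG (u ++ relator ++ v) (u ++ v).

Inductive gen_by (S : list word) : word -> Prop :=
| gen_by_nil : gen_by S []
| gen_by_cons s w : In s S -> gen_by S w -> gen_by S (s ++ w)
| gen_by_consinv s w : In s S -> gen_by S w -> gen_by S (winv s ++ w).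

Definition in_subgroup (S : list word) (g : word) : Prop :=
  exists u, gen_by S u /\ eqG g u.

Definition in_centraliser (h g : word) : Prop := eqG (g ++ h) (h ++ g).

(* Main.v *)
Require Import Defs.
From Stdlib Require Import List ZArith Lia Setoid Morphisms.
Import ListNotations.
Open Scope Z_scope.

#[local] Instance eqG_Equiv : Equivalence eqG.
Proof. split. exact eqG_refl. exact eqG_sym. exact eqG_trans. Qed.

Lemma eqG_app_l w u v : eqG u v -> eqG (w ++ u) (w ++ v).
Proof.
  induction 1.
  - reflexivity.
  - symmetry; auto.
  - etransitivity; eauto.
  - rewrite !app_assoc. rewrite <- (app_assoc (w++u)). apply eqG_cancel.
  - rewrite !app_assoc. rewrite <- (app_assoc (w++u)). apply eqG_rel.
Qed.

Lemma eqG_app_r w u v : eqG u v -> eqG (u ++ w) (v ++ w).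
Proof.
  induction 1.
  - reflexivity.
  - symmetry; auto.
  - etransitivity; eauto.
  - rewrite <- !app_assoc. simpl. apply (eqG_cancel u (v ++ w) x).
  - rewrite <- !app_assoc. apply eqG_rel.
Qed.

#[local] Instance app_Proper : Proper (eqG ==> eqG ==> eqG) (@app letter).
Proof.
  intros u u' Hu v v' Hv. etransitivity. apply eqG_app_r; eauto. apply eqG_app_l; auto.
Qed.

#[local] Instance cons_Proper (x : letter) : Proper (eqG ==> eqG) (cons x).
Proof. intros u v H. change (eqG ([x] ++ u) ([x] ++ v)). rewrite H. reflexivity. Qed.

Lemma linv_inv x : linv (linv x) = x.
Proof. destruct x as [g b]; unfold linv; simpl; rewrite Bool.negb_involutive; reflexivity. Qed.

Lemma winv_app u v : winv (u ++ v) = winv v ++ winv u.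
Proof. unfold winv. rewrite map_app, rev_app_distr. reflexivity. Qed.

Lemma winv_inv w : winv (winv w) = w.
Proof.
  unfold winv. rewrite map_rev, rev_involutive, map_map.
  induction w; simpl; auto. rewrite linv_inv, IHw; auto.
Qed.

Lemma winv_cons x w : winv (x :: w) = winv w ++ [linv x].
Proof. reflexivity. Qed.

Lemma cancel1 x : eqG [x; linv x] [].
Proof. exact (eqG_cancel [] [] x). Qed.

Lemma w_winv w : eqG (w ++ winv w) [].
Proof.
  induction w as [|x w IH]; simpl. reflexivity.
  rewrite winv_cons. rewrite app_assoc. rewrite IH. simpl. apply cancel1.
Qed.

Lemma winv_w w : eqG (winv w ++ w) [].
Proof. rewrite <- (winv_inv w) at 2. apply w_winv. Qed.

Lemma w_winv_r w r : eqG (w ++ winv w ++ r) r.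
Proof. rewrite app_assoc, w_winv. reflexivity. Qed.
Lemma winv_w_r w r : eqG (winv w ++ w ++ r) r.
Proof. rewrite app_assoc, winv_w. reflexivity. Qed.

Fixpoint rep (w : word) (n : nat) : word :=
  match n with O => [] | S n => w ++ rep w n end.

Definition zpow (w : word) (m : Z) : word :=
  if Z.leb 0 m then rep w (Z.to_nat m) else rep (winv w) (Z.to_nat (- m)).

Lemma rep_snoc w n : rep w (S n) = rep w n ++ w.
Proof. induction n. simpl. rewrite app_nil_r; auto. change (rep w (S (S n))) with (w ++ rep w (S n)). rewrite IHn, app_assoc. f_equal. exact IHn. Qed.

Lemma zpow_succ w m : eqG (zpow w (m + 1)) (zpow w m ++ w).
Proof.
  unfold zpow. destruct (Z.leb_spec 0 m).
  - destruct (Z.leb_spec 0 (m+1)); [|lia].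
    replace (Z.to_nat (m+1)) with (S (Z.to_nat m)) by lia. rewrite rep_snoc. reflexivity.
  - replace (Z.to_nat (- m)) with (S (Z.to_nat (-(m+1)))) by lia.
    rewrite rep_snoc, <- app_assoc, winv_w, app_nil_r.
    destruct (Z.leb_spec 0 (m+1)).
    + replace (m+1) with 0 by lia. reflexivity.
    + reflexivity.
Qed.

Lemma zpow_pred w m : eqG (zpow w (m - 1)) (zpow w m ++ winv w).
Proof.
  rewrite <- (Z.sub_add 1 m) at 2. rewrite zpow_succ.
  rewrite <- app_assoc, w_winv, app_nil_r. reflexivity.
Qed.

Definition comm (x y : word) := eqG (x ++ y) (y ++ x).

Lemma comm_sym x y : comm x y -> comm y x.
Proof. unfold comm; intros; symmetry; auto. Qed.

Lemma comm_winv x y : comm x y -> comm (winv x) y.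
Proof.
  unfold comm; intros H.
  rewrite <- (app_nil_r (winv x ++ y)).
  rewrite <- (w_winv x). rewrite <- !app_assoc. rewrite (app_assoc y x), <- H.
  rewrite !app_assoc. rewrite winv_w. reflexivity.
Qed.

Lemma comm_rep x y n : comm x y -> comm (rep x n) y.
Proof.
  unfold comm; intros H; induction n; simpl.
  - rewrite app_nil_r; reflexivity.
  - rewrite <- app_assoc, IHn, app_assoc, H, app_assoc. reflexivity.
Qed.

Lemma comm_zpow x y m : comm x y -> comm (zpow x m) y.
Proof.
  intros H; unfold zpow; destruct (0 <=? m); apply comm_rep; auto. apply comm_winv; auto.
Qed.

Lemma comm_zpow2 x y m k : comm x y -> comm (zpow x m) (zpow y k).
Proof. intros. apply comm_zpow. apply comm_sym, comm_zpow, comm_sym; auto. Qed.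

Lemma conj_rep t x n : eqG (rep (t ++ x ++ winv t) n) (t ++ rep x n ++ winv t).
Proof.
  induction n; simpl. rewrite w_winv; reflexivity.
  rewrite IHn. rewrite <- !app_assoc. rewrite (app_assoc (winv t) t), winv_w. simpl. reflexivity.
Qed.

Lemma conj_zpow t x m : eqG (zpow (t ++ x ++ winv t) m) (t ++ zpow x m ++ winv t).
Proof.
  unfold zpow; destruct (0 <=? m). apply conj_rep.
  rewrite !winv_app, winv_inv, <- app_assoc. apply conj_rep.
Qed.
Definition state : Type := (Z * Z * list (Z * bool))%type.

Definition act (s : state) (x : letter) : state :=
  let '(a, b, l) := s in
  match x with
  | (Gc, false) => (a + 1, b, l)
  | (Gc, true) => (a - 1, b, l)
  | (Gq, false) =>
      match l with
      | (m, true) :: l' => if Z.eqb a 0 then (b, m, l') else (b, 0, (a, false) :: l)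
      | _ => (b, 0, (a, false) :: l)
      end
  | (Gq, true) =>
      match l with
      | (m, false) :: l' => if Z.eqb b 0 then (m, a, l') else (0, a, (b, true) :: l)
      | _ => (0, a, (b, true) :: l)
      end
  end.

Fixpoint red (l : list (Z * bool)) : Prop :=
  match l with
  | (m1, s1) :: (((m2, s2) :: _) as t) => (m1 <> 0 \/ s1 = s2) /\ red t
  | _ => True
  end.

Lemma red_cons2 m1 s1 m2 s2 t :
  red ((m1, s1) :: (m2, s2) :: t) = ((m1 <> 0 \/ s1 = s2) /\ red ((m2, s2) :: t)).
Proof. reflexivity. Qed.
Lemma red_tail p t : red (p :: t) -> red t.
Proof. destruct p, t as [|[]]; cbn; tauto. Qed.
Lemma red_one p : red [p].
Proof. destruct p; exact I. Qed.
Arguments red : simpl never.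

Definition redS (s : state) : Prop := let '(_, _, l) := s in red l.

Definition run (s : state) (w : word) : state := fold_left act w s.

Definition e0 : state := (0, 0, []).

Ltac crush :=
  repeat (match goal with
          | H : _ /\ _ |- _ => destruct H
          | H : _ \/ _ |- _ => destruct H
          | H : red ((_,_)::(_,_)::_) |- _ => rewrite red_cons2 in H
          | |- context [Z.eqb ?x ?y] => destruct (Z.eqb_spec x y)
          | |- context [match ?l with _ => _ end] => is_var l; destruct l
          end; cbn [act linv fst snd negb red run fold_left app relator wc wc1 winv wq wqi rev map] in *);
  try subst; try discriminate; try tauto;
  try (exfalso; lia); try reflexivity; try (repeat f_equal; lia).

Lemma act_red s x : redS s -> redS (act s x).
Proof.
  destruct s as [[a b] l]; destruct x as [[|] [|]]; cbn; auto;
  (destruct l as [|[m [|]] t]; cbn); intros H; try (apply red_one);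
  try (destruct (Z.eqb_spec a 0)); try (destruct (Z.eqb_spec b 0)); cbn;
  try (eapply red_tail; eassumption);
  rewrite red_cons2; split; auto; lia.
Qed.

Lemma run_red s w : redS s -> redS (run s w).
Proof. revert s; induction w; cbn; auto. intros s H; apply IHw, act_red, H. Qed.

Lemma act_cancel s x : redS s -> act (act s x) (linv x) = s.
Proof.
  destruct s as [[a b] l]; destruct x as [[|] [|]]; cbn; intros Hr; crush.
Qed.

Lemma act_rel s : redS s -> run s relator = s.
Proof.
  destruct s as [[a b] l]; cbn; intros Hr; crush.
Qed.

Lemma run_app s u v : run s (u ++ v) = run (run s u) v.
Proof. apply fold_left_app. Qed.

Lemma run_eqG u v : eqG u v -> forall s, redS s -> run s u = run s v.
Proof.
  induction 1; intros s Hs; auto.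
  - symmetry; auto.
  - rewrite IHeqG1; auto.
  - rewrite !run_app. cbn. rewrite act_cancel; auto. apply run_red; auto.
  - rewrite !run_app. rewrite act_rel; auto. apply run_red; auto.
Qed.

Definition cpow (m : Z) : word := zpow wc m.
Definition dpow (m : Z) : word := zpow wc1 m.

Fixpoint lw (l : list (Z * bool)) : word :=
  match l with
  | [] => []
  | (m, s) :: t => lw t ++ (if s then dpow m ++ wqi else cpow m ++ wq)
  end.

Definition nfw (s : state) : word := let '(a, b, l) := s in lw l ++ cpow a ++ dpow b.

Lemma comm_cd : comm wc wc1.
Proof.
  unfold comm.
  assert (H : eqG relator []) by exact (eqG_rel [] []).
  unfold relator in H.
  rewrite <- (app_nil_l (wc1 ++ wc)). rewrite <- H.
  rewrite <- !app_assoc. rewrite (app_assoc (winv wc1)), winv_w, app_nil_l.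
  rewrite winv_w, app_nil_r. reflexivity.
Qed.

Lemma comm_cpow_dpow a b : comm (cpow a) (dpow b).
Proof. apply comm_zpow2, comm_cd. Qed.

Lemma comm_dpow_c b : comm (dpow b) wc.
Proof. apply comm_zpow, comm_sym, comm_cd. Qed.
Lemma comm_dpow_ci b : comm (dpow b) (winv wc).
Proof. apply comm_sym, comm_winv, comm_sym, comm_dpow_c. Qed.

Lemma winv_wq : winv wq = wqi.
Proof. reflexivity. Qed.

Lemma dpow_conj b : eqG (dpow b) (wq ++ cpow b ++ wqi).
Proof. unfold dpow, wc1. rewrite <- winv_wq. apply conj_zpow. Qed.

Lemma dq b r : eqG (dpow b ++ wq ++ r) (wq ++ cpow b ++ r).
Proof.
  rewrite dpow_conj. rewrite <- !app_assoc. rewrite <- winv_wq. rewrite winv_w_r. reflexivity.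
Qed.

Lemma cqi a r : eqG (cpow a ++ wqi ++ r) (wqi ++ dpow a ++ r).
Proof.
  rewrite dpow_conj. rewrite <- !app_assoc. rewrite <- winv_wq. rewrite winv_w_r. reflexivity.
Qed.

Lemma commr x y r : comm x y -> eqG (x ++ y ++ r) (y ++ x ++ r).
Proof. unfold comm; intros H; rewrite !app_assoc, H; reflexivity. Qed.

Lemma dpow0 : dpow 0 = []. Proof. reflexivity. Qed.
Lemma cpow0 : cpow 0 = []. Proof. reflexivity. Qed.

Lemma decode_act s x : eqG (nfw (act s x)) (nfw s ++ [x]).
Proof.
  destruct s as [[a b] l]; destruct x as [[|] [|]]; cbn [act nfw].
  -
    unfold cpow. rewrite zpow_pred. rewrite <- !app_assoc.
    apply eqG_app_l. apply eqG_app_l. fold (cpow a).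
    first [exact (comm_dpow_ci b) | symmetry; exact (comm_dpow_ci b)].
  - unfold cpow. rewrite zpow_succ. rewrite <- !app_assoc.
    apply eqG_app_l. apply eqG_app_l. fold (cpow a).
    first [exact (comm_dpow_c b) | symmetry; exact (comm_dpow_c b)].
  -
    assert (Hpush : eqG (nfw (0, a, (b, true) :: l)) (nfw (a, b, l) ++ [(Gq, true)])).
    { cbn [nfw lw]. rewrite cpow0, app_nil_l. rewrite <- !app_assoc.
      apply eqG_app_l. change [(Gq,true)] with wqi.
      rewrite (commr (cpow a) (dpow b) wqi (comm_cpow_dpow a b)). apply eqG_app_l.
      pose proof (cqi a []) as Hc. rewrite !app_nil_r in Hc. symmetry; exact Hc. }
    destruct l as [|[m [|]] t]; try exact Hpush.
    destruct (Z.eqb_spec b 0); [|exact Hpush]. subst b.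
    cbn [nfw lw]. rewrite dpow0, app_nil_r. rewrite <- !app_assoc.
    apply eqG_app_l, eqG_app_l. change [(Gq,true)] with wqi.
    rewrite dpow_conj. reflexivity.
  -
    assert (Hpush : eqG (nfw (b, 0, (a, false) :: l)) (nfw (a, b, l) ++ [(Gq, false)])).
    { cbn [nfw lw]. rewrite dpow0, app_nil_r. rewrite <- !app_assoc.
      apply eqG_app_l, eqG_app_l. change [(Gq,false)] with wq.
      pose proof (dq b []) as Hd. rewrite !app_nil_r in Hd. symmetry; exact Hd. }
    destruct l as [|[m [|]] t]; try exact Hpush.
    destruct (Z.eqb_spec a 0); [|exact Hpush]. subst a.
    cbn [nfw lw]. rewrite cpow0, app_nil_l. rewrite <- !app_assoc.
    apply eqG_app_l. change [(Gq,false)] with wq.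
    pose proof (dq b []) as Hd. rewrite !app_nil_r in Hd. rewrite Hd.
    rewrite (app_assoc wqi wq), (winv_w wq : eqG (wqi ++ wq) []).
    rewrite app_nil_l. apply comm_cpow_dpow.
Qed.

Lemma decode w : eqG (nfw (run e0 w)) w.
Proof.
  induction w as [|w x IH] using rev_ind.
  - reflexivity.
  - rewrite run_app. cbn [run fold_left]. rewrite decode_act, IH. reflexivity.
Qed.

Lemma faithful u v : run e0 u = run e0 v -> eqG u v.
Proof. intros H. rewrite <- (decode u), <- (decode v), H. reflexivity. Qed.

(* left multiplication by c (false) or d (true) *)
Fixpoint Lp (y : bool) (l : list (Z * bool)) : list (Z * bool) * option bool :=
  match l with
  | [] => ([], Some y)
  | (m, s) :: t =>
      match Lp y t with
      | (t', None) => ((m, s) :: t', None)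
      | (t', Some z) => if Bool.eqb z s then ((m + 1, s) :: t', None)
                        else ((m, s) :: t', Some (negb z))
      end
  end.

Definition Lst (y : bool) (s : state) : state :=
  let '(a, b, l) := s in
  match Lp y l with
  | (l', None) => (a, b, l')
  | (l', Some false) => (a + 1, b, l')
  | (l', Some true) => (a, b + 1, l')
  end.

Ltac zeq := match goal with |- (?x1,?y1,?z1) = (?x2,?y2,?z2) =>
  replace x1 with x2 by lia; replace y1 with y2 by lia; reflexivity end.

Lemma Lst_act y s x : Lst y (act s x) = act (Lst y s) x.
Proof.
  destruct s as [[a b] l]; destruct x as [[|] [|]];
  [ unfold act, Lst; destruct (Lp y l) as [l' [[|]|]]; try reflexivity; zeq
  | unfold act, Lst; destruct (Lp y l) as [l' [[|]|]]; try reflexivity; zeq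
  | | ];
  (destruct l as [|[m s] t];
   [ destruct y; cbn; try reflexivity; destruct (Z.eqb_spec a 0); destruct (Z.eqb_spec b 0); try reflexivity; try lia; zeq
   | destruct s; cbn [act]; repeat (match goal with |- context [Z.eqb ?x ?y] => destruct (Z.eqb_spec x y) end; cbn [act]);
     cbn [Lst Lp]; destruct (Lp y t) as [t' [z|]]; try destruct z;
     cbn; repeat (match goal with |- context [Z.eqb ?x ?y] => destruct (Z.eqb_spec x y) end; cbn);
     try reflexivity; try (exfalso; lia); try zeq ]).
Qed.

Lemma run_Lst y s g : run (Lst y s) g = Lst y (run s g).
Proof.
  revert s; induction g as [|x g IH]; intros s; cbn; auto.
  rewrite <- Lst_act. apply IH.
Qed.

Lemma run_d a b l : red l -> run (a, b, l) wc1 = (a, b + 1, l).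
Proof.
  intros Hr. destruct l as [|[m [|]] t]; cbn.
  - reflexivity.
  - destruct (Z.eqb_spec a 0); cbn.
    + subst. destruct t as [|[m' [|]] t']; cbn; try reflexivity.
      destruct (Z.eqb_spec m 0); try reflexivity. subst.
      rewrite red_cons2 in Hr. destruct Hr as [[H|H] _]; [lia|discriminate].
    + reflexivity.
  - reflexivity.
Qed.

Lemma gen_app S u v : gen_by S u -> gen_by S v -> gen_by S (u ++ v).
Proof.
  induction 1; intros Hv; auto.
  - rewrite <- app_assoc. apply gen_by_cons; auto.
  - rewrite <- app_assoc. apply gen_by_consinv; auto.
Qed.

Lemma insub_app S u v : in_subgroup S u -> in_subgroup S v -> in_subgroup S (u ++ v).
Proof.
  intros [u' [Hu Hu']] [v' [Hv Hv']]. exists (u' ++ v'). split. apply gen_app; auto.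
  rewrite Hu', Hv'. reflexivity.
Qed.

Lemma insub_eqG S g h : eqG g h -> in_subgroup S h -> in_subgroup S g.
Proof. intros H [u [Hu Hu']]. exists u. split; auto. rewrite H; auto. Qed.

#[local] Instance insub_Proper S : Proper (eqG ==> iff) (in_subgroup S).
Proof. intros g h H; split; intros; eapply insub_eqG; eauto. symmetry; auto. Qed.

Lemma insub_nil S : in_subgroup S [].
Proof. exists []. split. constructor. reflexivity. Qed.

Lemma insub_zpow S s m : In s S -> in_subgroup S (zpow s m).
Proof.
  intros Hs. exists (zpow s m). split; [|reflexivity].
  unfold zpow; destruct (0 <=? m); [generalize (Z.to_nat m) | generalize (Z.to_nat (- m))];
  intros n; induction n; cbn [rep]; try apply gen_by_nil.
  - apply gen_by_cons; auto.
  - apply gen_by_consinv; auto.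
Qed.

Definition HS : list word := [wc; wc1; wc2].

Lemma wc2_eq : wq ++ wc1 ++ winv wq = wc2.
Proof. reflexivity. Qed.

Lemma Lp_char : forall l,
  (forall l', Lp true l = (l', Some true) -> in_subgroup HS (lw l)) /\
  (forall l', Lp true l = (l', Some false) -> exists h, in_subgroup HS h /\ eqG (lw l) (h ++ wq)).
Proof.
  induction l as [|[m s] t [IH1 IH2]].
  - split; intros l' H; cbn in H; inversion H. apply insub_nil.
  - cbn [Lp]. destruct (Lp true t) as [t' [z|]] eqn:E;
    [| split; intros l'' H; discriminate].
    destruct (Bool.eqb z s) eqn:Ezs; [split; intros l'' H; discriminate|].
    destruct z, s; try discriminate; split; intros l'' H; inversion H; subst.
    +
      exists (lw t ++ cpow m). split.
      * apply insub_app. eapply IH1; eauto. apply insub_zpow. cbn; auto.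
      * cbn [lw]. rewrite <- !app_assoc. reflexivity.
    +
      destruct (IH2 _ eq_refl) as [h [Hh Heq]].
      cbn [lw]. rewrite Heq. rewrite <- !app_assoc.
      apply insub_app; auto.
      apply (insub_eqG _ _ (zpow wc2 m)).
      * rewrite <- wc2_eq, conj_zpow. rewrite winv_wq. reflexivity.
      * apply insub_zpow. cbn; auto.
Qed.

Lemma comm_gen s : In s HS -> comm s wc1 /\ comm (winv s) wc1.
Proof.
  intros Hs; unfold comm; split; apply faithful;
  repeat (destruct Hs as [<-|Hs]); try contradiction; vm_compute; reflexivity.
Qed.

Theorem mainTheorem10 :
  forall g : word, in_centraliser wc1 g <-> in_subgroup [wc; wc1; wc2] g.
Proof.
  intros g; unfold in_centraliser; split.
  - intros Hc.
    assert (Hr : redS (run e0 g)) by (apply run_red; exact I).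
    pose proof (run_eqG _ _ Hc e0 I) as Hrun.
    rewrite !run_app in Hrun.
    change (run e0 wc1) with (Lst true e0) in Hrun.
    rewrite run_Lst in Hrun.
    apply (insub_eqG _ _ (nfw (run e0 g))). symmetry; apply decode.
    destruct (run e0 g) as [[a b] l].
    rewrite run_d in Hrun by exact Hr.
    unfold Lst in Hrun. destruct (Lp true l) as [l' [[|]|]] eqn:E.
    + inversion Hrun; subst. cbn [nfw].
      apply insub_app. eapply (proj1 (Lp_char _)); exact E.
      apply insub_app; apply insub_zpow; cbn; auto.
    + inversion Hrun; lia.
    + inversion Hrun; lia.
  - intros [u [Hu Hg]].
    assert (H : eqG (u ++ wc1) (wc1 ++ u)).
    { clear Hg. induction Hu.
      - rewrite app_nil_r, app_nil_l. reflexivity.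
      - destruct (comm_gen s H) as [H1 _]. unfold comm in H1.
        rewrite <- app_assoc, IHHu, app_assoc, H1, app_assoc. reflexivity.
      - destruct (comm_gen s H) as [_ H1]. unfold comm in H1.
        rewrite <- app_assoc, IHHu, app_assoc, H1, app_assoc. reflexivity. }
    rewrite Hg. exact H.
Qed.
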